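(* Let $f:\mathbb{R}^n\to\mathbb{R}$ be a convex, continuously differentiable, locally strongly convex function with locally Lipschitz gradient and $\mathcal{X}^*:=\arg\min f\neq\emptyset$, optimal value $f^*$. Let $x^0$ be such that $\Lambda(x^0):=\{x:f(x)\le f(x^0)\}$ is bounded; let $r:=\max\{\|x\|:x\in\Lambda(x^0)\}$, $\Omega:=\overline{B}(0;5r)$, let $L_\Omega>0$ satisfy $\|\nabla f(x)-\nabla f(y)\|\le L_\Omega\|x-y\|$ on $\Omega$, and $\mu_\Omega:=\inf_{x,y\in\Omega,x\ne y}\frac{\langle\nabla f(y)-\nabla f(x),y-x\rangle}{\|y-x\|^2}$, with $\mu_\Omega<L_\Omega$. Let $(x^k)$ be generated by $x^{k+1}=x^k-\alpha_k\nabla f(x^k)$ with $\alpha_k\in[\bar\alpha,1/L_\Omega]$, $0<\bar\alpha<1/L_\Omega$. Let $\varepsilon>0$, $x^*$ an optimal solution, $q_0:=\frac{2\bar\alpha\mu_\Omega L_\Omega}{\mu_\Omega+L_\Omega}$, $q_1:=\frac{\mu_\Omega^2\bar\alpha^2}{4}$, and for $a,b>0$ let $M(a,b):=\Big\lceil\frac{\log(\varepsilon^{-1})+\log a}{\log(b^{-1})}+1\Big\rceil$. Then: (a) the first index $N_x(\varepsilon)$ with $\|x^k-x^*\|\le\varepsilon$ satisfies $N_x(\varepsilon)\le M(\|x^0-x^*\|,\sqrt{1-q_0})$; (b) the first index $N_f(\varepsilon)$ with $f(x^k)-f^*\le\varepsilon$ satisfies $N_f(\varepsilon)\le M(f(x^0)-f^*,1-q_1)$;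 (c) the first index $N_{\nabla f}(\varepsilon)$ with $\|\nabla f(x^k)\|\le\varepsilon$ satisfies $N_{\nabla f}(\varepsilon)\le M\big(\sqrt{2L_\Omega^2\mu_\Omega^{-1}(f(x^0)-f^* )},\sqrt{1-q_1}\big)$.
   Context: $f$ is locally strongly convex if every $x$ has $\delta_x>0$, $\mu_x>0$ such that $f(y)\ge f(z)+\langle\nabla f(z),y-z\rangle+\frac{\mu_x}{2}\|y-z\|^2$ for all $y,z\in B(x;\delta_x)$. *)

(* Defs.v *)
From HB Require Import structures.
From mathcomp Require Import all_boot all_order all_algebra.
From mathcomp Require Import all_classical all_reals all_analysis.
Set Implicit Arguments. Unset Strict Implicit. Unset Printing Implicit Defensive.
Import Order.TTheory GRing.Theory Num.Theory.
Import numFieldNormedType.Exports.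
Local Open Scope classical_set_scope.
Local Open Scope ring_scope.

Section Defs.
Variables (R : realType) (n : nat).
Implicit Types (x y z : 'rV[R]_n) (f : 'rV[R]_n -> R) (g : 'rV[R]_n -> 'rV[R]_n).

Definition dotv x y : R := \sum_(i < n) x ord0 i * y ord0 i.
Definition enorm x : R := Num.sqrt (dotv x x).

Definition is_gradient f g : Prop :=
  forall x, differentiable f x /\ forall v, ('d f x : 'rV[R]_n -> R) v = dotv (g x) v.

Definition convex_fun f : Prop :=
  forall x y (t : R), 0 <= t <= 1 ->
    f (t *: x + (1 - t) *: y) <= t * f x + (1 - t) * f y.

Definition locally_strongly_convex f g : Prop :=
  forall x, exists delta mu : R, 0 < delta /\ 0 < mu /\
    forall y z, enorm (y - x) < delta -> enorm (z - x) < delta ->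
      f y >= f z + dotv (g z) (y - z) + mu / 2 * enorm (y - z) ^+ 2.

Definition locally_lipschitz g : Prop :=
  forall x, exists delta L : R, 0 < delta /\
    forall y z, enorm (y - x) < delta -> enorm (z - x) < delta ->
      enorm (g y - g z) <= L * enorm (y - z).

Definition mu_on g (Omega : set 'rV[R]_n) : R :=
  inf [set q | exists x y, [/\ Omega x, Omega y, x != y &
                 q = dotv (g y - g x) (y - x) / enorm (y - x) ^+ 2]].

Definition Mbound (eps a b : R) : int :=
  Num.ceil ((ln (eps^-1) + ln a) / ln (b^-1) + 1).

Definition first_index (P : nat -> Prop) (N : nat) : Prop :=
  P N /\ forall k, (k < N)%N -> ~ P k.
End Defs.

(* Main.v *)
Require Import Defs.
From HB Require Import structures.
From mathcomp Require Import all_boot all_order all_algebra.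
From mathcomp Require Import all_classical all_reals all_analysis.
From mathcomp Require Import ring lra.
Import Order.TTheory GRing.Theory Num.Theory.
Import numFieldNormedType.Exports.
Local Open Scope classical_set_scope.
Local Open Scope ring_scope.
Set Implicit Arguments. Unset Strict Implicit. Unset Printing Implicit Defensive.

Section Basics.
Variables (R : realType) (n : nat).
Local Notation V := 'rV[R]_n.
Implicit Types x y z u v w : V.

Definition Qn x := dotv x x.

Lemma dotvC x y : dotv x y = dotv y x.
Proof. by apply: eq_bigr => i _; rewrite mulrC. Qed.

Lemma dotvDl x y z : dotv (x + y) z = dotv x z + dotv y z.
Proof. by rewrite /dotv -big_split; apply: eq_bigr => i _; rewrite mxE mulrDl. Qed.

Lemma dotvZl (a : R) x y : dotv (a *: x) y = a * dotv x y.
Proof. by rewrite /dotv mulr_sumr; apply: eq_bigr => i _; rewrite mxE mulrA. Qed.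

Lemma dotvNl x y : dotv (- x) y = - dotv x y.
Proof. by rewrite -scaleN1r dotvZl mulN1r. Qed.

Lemma dotvBl x y z : dotv (x - y) z = dotv x z - dotv y z.
Proof. by rewrite dotvDl dotvNl. Qed.

Lemma dotvDr x y z : dotv z (x + y) = dotv z x + dotv z y.
Proof. by rewrite dotvC dotvDl !(dotvC z). Qed.

Lemma dotvZr (a : R) x y : dotv y (a *: x) = a * dotv y x.
Proof. by rewrite dotvC dotvZl dotvC. Qed.

Lemma dotvNr x y : dotv y (- x) = - dotv y x.
Proof. by rewrite dotvC dotvNl dotvC. Qed.

Lemma dotvBr x y z : dotv z (x - y) = dotv z x - dotv z y.
Proof. by rewrite dotvDr dotvNr. Qed.

Lemma dotv0l y : dotv 0 y = 0.
Proof. by rewrite -(scale0r 0) dotvZl mul0r. Qed.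

Lemma dotv0r y : dotv y 0 = 0.
Proof. by rewrite dotvC dotv0l. Qed.

Lemma Qn_ge0 x : 0 <= Qn x.
Proof. by apply: sumr_ge0 => i _; rewrite -expr2 sqr_ge0. Qed.

Lemma Qn_eq0 x : Qn x = 0 -> x = 0.
Proof.
move=> h; apply/rowP => i; rewrite mxE.
have := @psumr_eq0P _ _ xpredT (fun i => x ord0 i * x ord0 i).
move=> /(_ (fun i _ => ltac:(by rewrite -expr2 sqr_ge0)) h i isT) /eqP.
by rewrite mulf_eq0 orbb => /eqP.
Qed.

Lemma QnD x y : Qn (x + y) = Qn x + 2 * dotv x y + Qn y.
Proof. rewrite /Qn !dotvDl !dotvDr (dotvC y x); ring. Qed.

Lemma QnB x y : Qn (x - y) = Qn x - 2 * dotv x y + Qn y.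
Proof. rewrite /Qn !dotvBl !dotvBr (dotvC y x); ring. Qed.

Lemma QnZ (a : R) x : Qn (a *: x) = a ^+ 2 * Qn x.
Proof. rewrite /Qn dotvZl dotvZr; ring. Qed.

Lemma QnN x : Qn (- x) = Qn x.
Proof. by rewrite /Qn dotvNl dotvNr opprK. Qed.

Lemma enormE x : enorm x = Num.sqrt (Qn x).
Proof. by []. Qed.

Lemma enorm_ge0 x : 0 <= enorm x.
Proof. exact: sqrtr_ge0. Qed.

Lemma enorm_sq x : enorm x ^+ 2 = Qn x.
Proof. by rewrite enormE sqr_sqrtr // Qn_ge0. Qed.

Lemma enorm0 : enorm (0 : V) = 0.
Proof. by rewrite enormE /Qn dotv0l sqrtr0. Qed.

Lemma enorm_eq0 x : enorm x = 0 -> x = 0.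
Proof. by move=> h; apply: Qn_eq0; rewrite -enorm_sq h expr0n. Qed.

Lemma enormZ (a : R) x : enorm (a *: x) = `|a| * enorm x.
Proof. by rewrite !enormE QnZ sqrtrM ?sqr_ge0 // sqrtr_sqr. Qed.

Lemma enormN x : enorm (- x) = enorm x.
Proof. by rewrite !enormE QnN. Qed.

Lemma enormB x y : enorm (x - y) = enorm (y - x).
Proof. by rewrite -enormN opprB. Qed.

Lemma CS2 x y : dotv x y ^+ 2 <= Qn x * Qn y.
Proof.
have h := Qn_ge0 (Qn y *: x - dotv x y *: y).
rewrite QnB !QnZ dotvZl dotvZr ?(dotvC y x) in h.
have hy := Qn_ge0 y.
case: (ltrgt0P (Qn y)) => [yp||y0]; last first.
- by rewrite (Qn_eq0 y0) dotv0r expr0n /= mulr_ge0 ?Qn_ge0.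
- by rewrite ltNge hy.
have : 0 <= Qn y * (Qn x * Qn y - dotv x y ^+ 2) by nra.
by rewrite pmulr_rge0 // subr_ge0.
Qed.

Lemma CS x y : dotv x y <= enorm x * enorm y.
Proof.
case: (lerP (dotv x y) 0) => h.
  by apply: le_trans h _; rewrite mulr_ge0 // enorm_ge0.
rewrite -ler_sqr ?nnegrE ?(ltW h) ?mulr_ge0 ?enorm_ge0 //.
by rewrite exprMn !enorm_sq CS2.
Qed.

Lemma CSabs x y : `|dotv x y| <= enorm x * enorm y.
Proof.
rewrite ler_norml CS andbT -[- _ <= _]lerN2 opprK -dotvNl.
by apply: le_trans (CS _ _) _; rewrite enormN.
Qed.

Lemma enormD x y : enorm (x + y) <= enorm x + enorm y.
Proof.
rewrite -ler_sqr ?nnegrE ?addr_ge0 ?enorm_ge0 //.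
rewrite enorm_sq QnD sqrrD !enorm_sq.
have := CS x y; lra.
Qed.

Lemma enormD3 x y : enorm x - enorm y <= enorm (x - y).
Proof.
have := enormD (x - y) y; rewrite subrK; lra.
Qed.

End Basics.
Lemma is_derive_poly2 (R : realType) (A K t : R) :
  is_derive t 1 (fun s : R => s * A + K * (s * s)) (A + K * (2 * t)).
Proof.
have h1 : is_derive t (1:R) (@id R) 1 := is_derive_id t 1.
have hA : is_derive t (1:R) (cst A) 0 := is_derive_cst A t 1.
have hK : is_derive t (1:R) (cst K) 0 := is_derive_cst K t 1.
have h2 := is_deriveM h1 hA.
have h3 := is_deriveM h1 h1.
have h4 := is_deriveM hK h3.
have h5 := is_deriveD h2 h4.
apply: is_derive_eq h5 _.
rewrite /= !scaler0 !add0r !addr0 /GRing.scale /=; ring.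
Qed.

Lemma mono01 (R : realType) (h dh : R -> R) :
  (forall t : R, is_derive t (1:R) h (dh t)) -> (forall t, 0 <= t <= 1 -> 0 <= dh t) -> h 0 <= h 1.
Proof.
move=> hd hpos.
have cont : {within `[0, 1], continuous h}.
  apply: derivable_within_continuous => t _; exact: ex_derive.
have [c c01 e] := MVT_segment ler01 (fun t _ => hd t) cont.
rewrite -subr_ge0 e subr0 mulr1; apply: hpos.
by move: c01; rewrite in_itv.
Qed.
Lemma line_derive (R : realType) (n : nat) (f : 'rV[R]_n -> R) (g : 'rV[R]_n -> 'rV[R]_n)
  (x v : 'rV[R]_n) (t : R) : is_gradient f g ->
  is_derive t 1 (fun s => f (x + s *: v)) (dotv (g (x + t *: v)) v).
Proof.
move=> hg.
have [df dg] := hg (x + t *: v).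
have E : (fun h : R => h^-1 *: (((fun s => f (x + s *: v)) \o shift t) (h *: 1) - f (x + t *: v)))
   = (fun h : R => h^-1 *: ((f \o shift (x + t *: v)) (h *: v) - f (x + t *: v))).
  apply/funext => h /=; congr (_ *: (f _ - _)).
  by rewrite /= [h%:A]mulr1 scalerDl addrCA addrA.
have dv : derivable f (x + t *: v) v by exact: diff_derivable.
apply: DeriveDef.
  by rewrite /derivable E.
by rewrite /derive E -/(derive f _ v) deriveE // dg.
Qed.

Section Quad.
Variables (R : realType) (n : nat) (f : 'rV[R]_n -> R) (g : 'rV[R]_n -> 'rV[R]_n).
Hypothesis hg : is_gradient f g.
Local Notation V := 'rV[R]_n.

Lemma quad_lower (x v : V) (c : R) :
  (forall t, 0 <= t <= 1 -> c * t * Qn v <= dotv (g (x + t *: v) - g x) v) ->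
  f x + dotv (g x) v + c / 2 * Qn v <= f (x + v).
Proof.
move=> H.
set A := dotv (g x) v; set K := c / 2 * Qn v.
have hd : forall t : R, is_derive t (1:R)
   (fun s => f (x + s *: v) - (s * A + K * (s * s)))
   (dotv (g (x + t *: v)) v - (A + K * (2 * t))).
  move=> t; exact: (is_deriveB (line_derive x v t hg) (is_derive_poly2 A K t)).
have := mono01 hd (fun t ht => ltac:(move: (H t ht); rewrite /= dotvBl /A /K; lra)).
rewrite !scale0r !scale1r addr0 /K; lra.
Qed.

Lemma quad_upper (x v : V) (c : R) :
  (forall t, 0 <= t <= 1 -> dotv (g (x + t *: v) - g x) v <= c * t * Qn v) ->
  f (x + v) <= f x + dotv (g x) v + c / 2 * Qn v.
Proof.
move=> H.
set A := dotv (g x) v; set K := c / 2 * Qn v.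
have hd : forall t : R, is_derive t (1:R)
   (fun s => (s * A + K * (s * s)) - f (x + s *: v))
   ((A + K * (2 * t)) - dotv (g (x + t *: v)) v).
  move=> t; exact: (is_deriveB (is_derive_poly2 A K t) (line_derive x v t hg)).
have := mono01 hd (fun t ht => ltac:(move: (H t ht); rewrite /= dotvBl /A /K; lra)).
rewrite !scale0r !scale1r addr0 /K; lra.
Qed.

End Quad.

Section Unif.
Variables (R : realType) (n : nat).
Local Notation V := 'rV[R]_n.

Lemma ball_coord (p a : V) e i : ball p e a -> `|p ord0 i - a ord0 i| < e.
Proof. by move=> [_ /(_ ord0 i)]. Qed.

Lemma Kcomp (rho : R) :
  compact [set v : V | forall i, `[-rho, rho]%classic (v ord0 i)].
Proof.
exact: (@rV_compact R n (fun _ => `[-rho, rho]%classic) (fun _ => @segment_compact R (-rho) rho)).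
Qed.

Lemma finmin (T : eqType) (s : seq T) (F : T -> R) :
  (forall p, 0 < F p) -> exists m, 0 < m /\ forall p, p \in s -> m <= F p.
Proof.
move=> Fp; elim: s => [|a s [m [m0 hm]]]; first by exists 1.
exists (Num.min m (F a)); split; first by rewrite lt_min m0 Fp.
move=> p; rewrite in_cons => /orP[/eqP ->|ps]; first by rewrite ge_min lexx orbT.
by rewrite ge_min hm.
Qed.

Lemma coord_le (v : V) i : `|v ord0 i| <= enorm v.
Proof.
rewrite enormE -sqrtr_sqr ler_sqrt ?Qn_ge0 // /Qn /dotv (bigD1 i) //= -expr2.
by rewrite lerDl sumr_ge0 // => j _; rewrite -expr2 sqr_ge0.
Qed.

Lemma enorm_coord_le (v : V) e : 0 <= e -> (forall i, `|v ord0 i| <= e) -> enorm v <= n%:R * e.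
Proof.
move=> e0 h.
rewrite -ler_sqr ?nnegrE ?enorm_ge0 ?mulr_ge0 // enorm_sq.
apply: (@le_trans _ _ (\sum_(i < n) e ^+ 2)).
  apply: ler_sum => i _; rewrite -expr2 -real_normK ?num_real //.
  by rewrite ler_sqr ?nnegrE ?normr_ge0.
rewrite sumr_const card_ord exprMn -[e ^+ 2 *+ n]mulr_natl ler_wpM2r ?sqr_ge0 //.
by rewrite -natrX ler_nat; case: n => // k; rewrite expnS leq_pmulr.
Qed.

Lemma unif (f : V -> R) (g : V -> V) : locally_strongly_convex f g -> forall rho : R,
  exists d c : R, 0 < d /\ 0 < c /\ forall a b : V, enorm a <= rho -> enorm (b - a) < d ->
    c * Qn (b - a) <= dotv (g b - g a) (b - a).
Proof.
move=> lsc rho.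
have H : forall p : V, exists pr : R * R, 0 < pr.1 /\ 0 < pr.2 /\
    forall y z, enorm (y - p) < pr.1 -> enorm (z - p) < pr.1 ->
      f y >= f z + dotv (g z) (y - z) + pr.2 / 2 * enorm (y - z) ^+ 2.
  by move=> p; have [d [m hh]] := lsc p; exists (d, m).
have [dm hdm] := choice H.
pose e := fun p => (dm p).1 / (4 * n.+1%:R).
have ep : forall p, 0 < e p.
  by move=> p; have [h1 _] := hdm p; rewrite /e divr_gt0 // mulr_gt0 // ltr0n.
have Kc := @Kcomp rho.
rewrite compact_cover in Kc.
have [D' _ cov] := Kc V setT (fun p => ball p (e p)) (fun p _ => ball_open p (e p))
  (fun v _ => ltac:(exists v => //; exact: ballxx)).
have [d1 [d1p hd1]] := finmin (finmap.enum_fset D') (fun p => (hdm p).1).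
have [c1 [c1p hc1]] := finmin (finmap.enum_fset D') (fun p => (hdm p).2.1).
exists (d1 / 2), c1; split; first by rewrite divr_gt0.
split => // a b ha hb.
have aK : forall i, `[-rho, rho]%classic (a ord0 i).
  move=> i; rewrite /= in_itv /= -ler_norml; exact: le_trans (coord_le a i) ha.
have [p pD' bp] := cov a aK.
have [dp0 [mp0 hp]] := hdm p.
have hap : enorm (a - p) <= (dm p).1 / 4.
  have := @enorm_coord_le (a - p) (e p) (ltW (ep p))
    (fun i => ltac:(rewrite !mxE distrC; exact: ltW (ball_coord i bp))).
  move/le_trans; apply; rewrite /e mulrA ler_pdivrMr ?mulr_gt0 ?ltr0n //.
  have -> : (dm p).1 / 4 * (4 * n.+1%:R) = (dm p).1 * n.+1%:R by field.
  by rewrite mulrC ler_wpM2l ?ler_nat ?(ltW dp0).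
have d1p' : d1 <= (dm p).1 := hd1 p pD'.
have hbp : enorm (b - p) < (dm p).1.
  have := enormD (b - a) (a - p); rewrite addrA subrK => /le_lt_trans; apply; lra.
have hap' : enorm (a - p) < (dm p).1 by lra.
have h1 := hp b a hbp hap'.
have h2 := hp a b hap' hbp.
rewrite enormB in h2; rewrite !enorm_sq in h1 h2.
have e1 : dotv (g b) (a - b) = - dotv (g b) (b - a) by rewrite -dotvNr opprB.
rewrite e1 in h2.
have hQ := Qn_ge0 (b - a).
have hc : c1 <= (dm p).2 := hc1 p pD'.
rewrite dotvBl.
nra.
Qed.

End Unif.

Lemma subdiv (R : realType) (D : R -> R -> R) (c eta : R) : 0 < eta ->
  (forall s t u, D s u <= D s t + D t u) ->
  (forall s t, 0 <= s -> s <= t -> t <= 1 -> t - s < eta -> D s t <= c * (t - s)) ->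
  D 0 1 <= c.
Proof.
move=> eta0 tri loc.
set m := (Num.truncn eta^-1).+1.
have m0 : 0 < m%:R :> R by rewrite ltr0n.
have hm : m%:R^-1 < eta.
  rewrite -[eta]invrK ltf_pV2 ?posrE ?invr_gt0 //; exact: truncnS_gt.
have key : forall k, (k <= m)%N -> D 0 (k%:R / m%:R) <= c * (k%:R / m%:R).
  elim=> [|k IH] hk.
    rewrite !mul0r; have := loc 0 0 (lexx _) (lexx _) ler01; rewrite subrr mulr0; exact.
  have e : k.+1%:R / m%:R - k%:R / m%:R = m%:R^-1 :> R.
    by rewrite -mulrBl -natrB // subSnn mul1r.
  have h1 := IH (ltnW hk).
  have h2 : D (k%:R / m%:R) (k.+1%:R / m%:R) <= c * m%:R^-1.
    have := loc (k%:R / m%:R) (k.+1%:R / m%:R); rewrite e; apply.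
    - by rewrite divr_ge0 ?ler0n.
    - by rewrite ler_pM2r ?invr_gt0 // ler_nat.
    - by rewrite ler_pdivrMr // mul1r ler_nat.
    - by [].
  apply: le_trans (tri _ (k%:R / m%:R) _) _.
  have : c * (k.+1%:R / m%:R) = c * (k%:R / m%:R) + c * m%:R^-1.
    by rewrite -mulrDr; congr (_ * _); move: e; lra.
  move=> ->; exact: lerD.
by have := key m (leqnn m); rewrite divff ?mulr1 // lt0r_neq0.
Qed.

Lemma count_bound (R : realType) (e : nat -> R) (a b eps : R) :
  0 < eps -> 0 <= a -> 0 < b -> b < 1 -> (forall k, e k <= b ^+ k * a) ->
  exists N, first_index (fun k => e k <= eps) N /\
     (N = 0%N \/ (N%:Z <= Mbound eps a b)%R).
Proof.
move=> eps0 a0 b0 b1 he.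
set X := (ln (eps^-1) + ln a) / ln (b^-1).
have lnb : 0 < ln (b^-1).
  by rewrite lnV ?posrE // oppr_gt0 ln_lt0 // b0 b1.
have key : forall k : nat, 0 < a -> X < k%:R -> b ^+ k * a < eps.
  move=> k ap hk.
  rewrite -ltr_ln ?posrE ?mulr_gt0 ?exprn_gt0 // lnM ?posrE ?exprn_gt0 // lnXn //.
  move: hk; rewrite /X ltr_pdivrMr // lnV ?posrE // lnV ?posrE //.
  rewrite -mulr_natl; lra.
have ex : exists k, e k <= eps.
  have [a00|ap] := eqVneq a 0.
    by exists 0%N; apply: le_trans (he 0%N) _; rewrite a00 mulr0 ltW.
  have ap' : 0 < a by rewrite lt0r ap a0.
  exists (Num.truncn X).+1; apply: le_trans (he _) _; apply: ltW; apply: key => //.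
  exact: truncnS_gt.
case: (ex_minnP ex) => N hN hmin.
exists N; split.
  split => // k kN hk; have := hmin k hk; rewrite leqNgt kN //.
case: N hN hmin => [|M] hN hmin; first by left.
right.
have hM : eps < e M.
  by rewrite ltNge; apply/negP => /hmin; rewrite ltnn.
have hbM : eps < b ^+ M * a := lt_le_trans hM (he M).
have ap : 0 < a.
  rewrite lt0r a0 andbT; apply/eqP => a00; move: hbM; rewrite a00 mulr0; lra.
have MX : M%:R <= X.
  rewrite leNgt; apply/negP => /(key M ap); lra.
rewrite /Mbound -/X.
have := Num.Theory.ceil_ge (X + 1).
move=> h; rewrite -(ler_int R); apply: le_trans h.
by rewrite -pmulrn -addn1 natrD; lra.
Qed.

Section Main.
Variables (R : realType) (n : nat) (f : 'rV[R]_n -> R) (g : 'rV[R]_n -> 'rV[R]_n)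
  (xstar x0 : 'rV[R]_n) (r L : R).
Hypothesis hg : is_gradient f g.
Hypothesis hmin : forall y, f xstar <= f y.
Hypothesis hLam : forall y, f y <= f x0 -> enorm y <= r.
Hypothesis hL0 : 0 < L.
Hypothesis hLip : forall y z, enorm y <= 5 * r -> enorm z <= 5 * r ->
  enorm (g y - g z) <= L * enorm (y - z).
Local Notation V := 'rV[R]_n.
Variable mu : R.
Hypothesis hmudef : mu = mu_on g [set y : 'rV[R]_n | enorm y <= 5 * r].

Lemma addKr' (x v : V) : x + v - x = v.
Proof. by rewrite addrC addKr. Qed.

Lemma gstar : g xstar = 0.
Proof.
set v := - g xstar.
set h := fun s : R => f (xstar + s *: v).
have d1 := line_derive xstar v 0 hg.
have d2 : is_derive (0:R) (1:R) h 0.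
  apply: (@derive1_at_min _ h (-1) 1 0).
  - lra.
  - by move=> t _; have [dd _] := line_derive xstar v t hg.
  - by rewrite in_itv /=; apply/andP; split; lra.
  - by move=> t _; rewrite /h scale0r addr0.
have e : dotv (g (xstar + 0 *: v)) v = 0.
  by rewrite -(@derive_val _ _ _ _ _ _ _ d1) (@derive_val _ _ _ _ _ _ _ d2).
move: e; rewrite scale0r addr0 /v dotvNr => /eqP; rewrite oppr_eq0 => /eqP.
exact: Qn_eq0.
Qed.

Lemma seg_in (rho : R) (x y : V) (t : R) : enorm x <= rho -> enorm y <= rho -> 0 <= t <= 1 ->
  enorm (x + t *: (y - x)) <= rho.
Proof.
move=> hx hy /andP[t0 t1].
have -> : x + t *: (y - x) = (1 - t) *: x + t *: y.
  by apply/rowP => i; rewrite !mxE; ring.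
apply: le_trans (enormD _ _) _; rewrite !enormZ !ger0_norm ?subr_ge0 //.
nra.
Qed.

Lemma descent (x v : V) : enorm x <= 5 * r -> enorm (x + v) <= 5 * r ->
  f (x + v) <= f x + dotv (g x) v + L / 2 * Qn v.
Proof.
move=> hx hxv; apply: quad_upper => // t t01.
have ht : enorm (x + t *: v) <= 5 * r.
  by have := seg_in hx hxv t01; rewrite (addrC x v) addrK.
apply: le_trans (CS _ _) _.
have h : enorm (g (x + t *: v) - g x) <= L * t * enorm v.
  have := hLip ht hx; rewrite addKr' enormZ ger0_norm ?mulrA //; by case/andP: t01.
rewrite -enorm_sq expr2 mulrA; apply: ler_wpM2r => //; exact: enorm_ge0.
Qed.

Lemma ratio_lb q : [set q | exists x y, [/\ enorm x <= 5 * r, enorm y <= 5 * r, x != y &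
                 q = dotv (g y - g x) (y - x) / enorm (y - x) ^+ 2]] q -> -L <= q.
Proof.
move=> [x [y [hx hy xy ->]]].
have Qp : 0 < enorm (y - x) ^+ 2.
  rewrite enorm_sq lt0r Qn_ge0 andbT; apply/eqP => /Qn_eq0/eqP.
  by rewrite subr_eq0 eq_sym (negbTE xy).
rewrite ler_pdivlMr //.
have := CSabs (g y - g x) (y - x); rewrite ler_norml => /andP[h _].
apply: le_trans h; rewrite mulNr lerN2 expr2 mulrA ler_wpM2r ?enorm_ge0 //.
exact: hLip.
Qed.

Lemma mu_lb (y z : V) : enorm y <= 5 * r -> enorm z <= 5 * r ->
  mu * Qn (y - z) <= dotv (g y - g z) (y - z).
Proof.
move=> hy hz.
have [->|yz] := eqVneq y z.
  by rewrite !subrr /Qn !dotv0l mulr0.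
have Qp : 0 < enorm (y - z) ^+ 2.
  rewrite enorm_sq lt0r Qn_ge0 andbT; apply/eqP => /Qn_eq0/eqP.
  by rewrite subr_eq0 (negbTE yz).
rewrite -enorm_sq -ler_pdivlMr // hmudef.
apply: ge_inf.
  by exists (-L) => q; exact: ratio_lb.
by exists z, y; split => //; rewrite eq_sym.
Qed.

Lemma strong_lower (x v : V) : enorm x <= 5 * r -> enorm (x + v) <= 5 * r ->
  f x + dotv (g x) v + mu / 2 * Qn v <= f (x + v).
Proof.
move=> hx hxv; apply: quad_lower => // t t01.
have ht : enorm (x + t *: v) <= 5 * r.
  by have := seg_in hx hxv t01; rewrite (addrC x v) addrK.
have := mu_lb ht hx; rewrite addKr' QnZ dotvZr.
case/andP: t01; rewrite le_eqVlt => /orP[/eqP <-|tp] _.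
  by rewrite scale0r addr0 subrr dotv0l !mulr0 mul0r.
move=> h; rewrite -(ler_pM2l tp); nra.
Qed.


Hypothesis hmuL : mu < L.
Hypothesis hmu0 : 0 < mu.
Hypothesis hrp : 0 < r.

Definition phi (z : V) := f z - mu / 2 * Qn z.
Definition gphi (z : V) := g z - mu *: z.

Lemma addrSub (x z : V) : x + (z - x) = z.
Proof. by rewrite addrC subrK. Qed.

Lemma phi_lower (x z : V) : enorm x <= 5 * r -> enorm z <= 5 * r ->
  phi x + dotv (gphi x) (z - x) <= phi z.
Proof.
move=> hx hz.
have := @strong_lower x (z - x) hx (ltac:(by rewrite addrSub)).
rewrite addrSub /phi /gphi QnB !dotvBl !dotvBr !dotvZl (dotvC x z) -/(Qn x) -/(Qn z).
lra.
Qed.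

Lemma phi_upper (y z : V) : enorm y <= 5 * r -> enorm z <= 5 * r ->
  phi z <= phi y + dotv (gphi y) (z - y) + (L - mu) / 2 * Qn (z - y).
Proof.
move=> hy hz.
have := @descent y (z - y) hy (ltac:(by rewrite addrSub)).
rewrite addrSub /phi /gphi QnB !dotvBl !dotvBr !dotvZl (dotvC y z) -/(Qn y) -/(Qn z).
lra.
Qed.

Lemma cocoer_alg (p D u : V) (a b c1 c2 k L' : R) : 0 < L' -> L' * k = 1 ->
  a + dotv p (u - k *: D) <= c1 ->
  c1 <= b + dotv (p + D) (- (k *: D)) + L' / 2 * Qn (- (k *: D)) ->
  b + dotv (p + D) (k *: D - u) <= c2 ->
  c2 <= a + dotv p (k *: D) + L' / 2 * Qn (k *: D) ->
  Qn D <= L' * dotv D u.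
Proof.
move=> L'0 hk h1 h2 h3 h4.
rewrite QnN QnZ !dotvDl !dotvBr !dotvNr !dotvZr -/(Qn D) in h1 h2 h3 h4.
have S : 2 * k * Qn D - L' * k ^+ 2 * Qn D <= dotv D u by lra.
have := ler_wpM2l (ltW L'0) S.
have -> : L' * (2 * k * Qn D - L' * k ^+ 2 * Qn D) =
          (2 * (L' * k) - (L' * k) ^+ 2) * Qn D by ring.
by rewrite hk expr1n; lra.
Qed.

Lemma cocoer (x y : V) :
  let k := (L - mu)^-1 in let D := gphi y - gphi x in
  enorm x <= 5 * r -> enorm y <= 5 * r ->
  enorm (y - k *: D) <= 5 * r -> enorm (x + k *: D) <= 5 * r ->
  Qn D <= (L - mu) * dotv D (y - x).
Proof.
move=> k D hx hy hz1 hz2.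
have h1 := phi_lower hx hz1.
have h2 := phi_upper hy hz1.
have h3 := phi_lower hy hz2.
have h4 := phi_upper hx hz2.
have eq : gphi y = gphi x + D by rewrite /D addrC subrK.
rewrite eq in h2 h3.
have e1 : y - k *: D - x = (y - x) - k *: D by apply/rowP => i; rewrite !mxE; ring.
have e2 : y - k *: D - y = - (k *: D) by apply/rowP => i; rewrite !mxE; ring.
have e3 : x + k *: D - y = k *: D - (y - x) by apply/rowP => i; rewrite !mxE; ring.
have e4 : x + k *: D - x = k *: D by apply/rowP => i; rewrite !mxE; ring.
rewrite e1 in h1; rewrite e2 in h2; rewrite e3 in h3; rewrite e4 in h4.
have L'0 : 0 < L - mu by rewrite subr_gt0.
have hk : (L - mu) * k = 1 by rewrite /k mulfV // lt0r_neq0.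
exact: (cocoer_alg L'0 hk h1 h2 h3 h4).
Qed.


Ltac prep := have hL0' := hL0; have hmu0' := hmu0; have hmuL' := hmuL; have hrp' := hrp.

Lemma hr : 0 <= r. Proof. exact: ltW. Qed.

Lemma xstar_in : enorm xstar <= r.
Proof. exact: hLam (hmin x0). Qed.

Lemma le5 (y : V) (c : R) : enorm y <= c * r -> c <= 5 -> enorm y <= 5 * r.
Proof. by move=> h c5; apply: le_trans h _; rewrite ler_wpM2r // hr. Qed.

Lemma gphi_local (x y : V) : enorm x <= r -> enorm y <= r ->
  enorm (y - x) <= r * (L - mu) / (L + mu) ->
  enorm (gphi y - gphi x) <= (L - mu) * enorm (y - x).
Proof.
prep.
move=> hx hy hyx.
have hx5 : enorm x <= 5 * r by apply: (@le5 _ 1); rewrite ?mul1r //; lra.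
have hy5 : enorm y <= 5 * r by apply: (@le5 _ 1); rewrite ?mul1r //; lra.
set D := gphi y - gphi x.
set k := (L - mu)^-1.
have L'0 : 0 < L - mu by rewrite subr_gt0.
have k0 : 0 < k by rewrite invr_gt0.
have hD : enorm D <= (L + mu) * enorm (y - x).
  have -> : D = (g y - g x) - mu *: (y - x) by apply/rowP => i; rewrite !mxE; ring.
  apply: le_trans (enormD _ _) _; rewrite enormN enormZ gtr0_norm //.
  have := hLip hy5 hx5; lra.
have hkD : enorm (k *: D) <= r.
  rewrite enormZ gtr0_norm //.
  apply: le_trans (ler_wpM2l (ltW k0) hD) _.
  have hLm : 0 <= L + mu by lra.
  apply: le_trans (ler_wpM2l (ltW k0) (ler_wpM2l hLm hyx)) _.
  have -> : k * ((L + mu) * (r * (L - mu) / (L + mu))) = r.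
    rewrite /k; field; apply/andP; split; apply: lt0r_neq0; lra.
  exact: lexx.
have hz1 : enorm (y - k *: D) <= 5 * r.
  apply: (@le5 _ 2); last by lra.
  by apply: le_trans (enormD _ _) _; rewrite enormN; lra.
have hz2 : enorm (x + k *: D) <= 5 * r.
  apply: (@le5 _ 2); last by lra.
  by apply: le_trans (enormD _ _) _; lra.
have h := cocoer hx5 hy5 hz1 hz2.
have h2 : Qn D <= (L - mu) * (enorm D * enorm (y - x)).
  apply: le_trans h _; rewrite ler_wpM2l ?(ltW L'0) //; exact: CS.
rewrite -enorm_sq in h2.
have eD := enorm_ge0 D; have eyx := enorm_ge0 (y - x).
case: (ltrgt0P (enorm D)) => [Dp||->]; last by rewrite mulr_ge0 // ltW.
- by nra.
- by rewrite ltNge eD.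
Qed.

Lemma gphi_lip (x y : V) : enorm x <= r -> enorm y <= r ->
  enorm (gphi y - gphi x) <= (L - mu) * enorm (y - x).
Proof.
prep.
move=> hx hy.
set w := enorm (y - x).
have w0 : 0 <= w := enorm_ge0 _.
set d' := r * (L - mu) / (L + mu).
have d'0 : 0 < d'.
  by rewrite /d' divr_gt0 ?mulr_gt0 // ?subr_gt0 //; lra.
pose G t := gphi (x + t *: (y - x)).
pose D s t := enorm (G t - G s).
have := @subdiv R D ((L - mu) * w) (d' / (w + 1)).
rewrite /D /G scale0r addr0 scale1r addrSub; apply.
- by rewrite divr_gt0 //; lra.
- move=> s t u.
  have -> : gphi (x + u *: (y - x)) - gphi (x + s *: (y - x)) =
    (gphi (x + u *: (y - x)) - gphi (x + t *: (y - x))) +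
    (gphi (x + t *: (y - x)) - gphi (x + s *: (y - x))) by rewrite addrA subrK.
  by rewrite addrC; apply: enormD.
- move=> s t s0 st t1 hst.
  have hs : enorm (x + s *: (y - x)) <= r by apply: seg_in => //; apply/andP; split => //; lra.
  have ht : enorm (x + t *: (y - x)) <= r by apply: seg_in => //; apply/andP; split => //; lra.
  have eba : x + t *: (y - x) - (x + s *: (y - x)) = (t - s) *: (y - x).
    by apply/rowP => i; rewrite !mxE; ring.
  have := gphi_local hs ht; rewrite eba enormZ ger0_norm ?subr_ge0 // -/w.
  have -> : (L - mu) * ((t - s) * w) = (L - mu) * w * (t - s) by ring.
  apply.
  move: hst; rewrite ltr_pdivlMr; last by lra.
  move=> hh; rewrite -/d'; nra.
Qed.

Lemma nesterov (x : V) : enorm x <= r ->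
  Qn (g x) + mu * L * Qn (x - xstar) <= (L + mu) * dotv (g x) (x - xstar).
Proof.
prep.
move=> hx.
have hs := xstar_in.
have hx5 : enorm x <= 5 * r by apply: (@le5 _ 1); rewrite ?mul1r //; lra.
have hs5 : enorm xstar <= 5 * r by apply: (@le5 _ 1); rewrite ?mul1r //; lra.
set D := gphi x - gphi xstar.
set k := (L - mu)^-1.
have L'0 : 0 < L - mu by rewrite subr_gt0.
have k0 : 0 < k by rewrite invr_gt0.
have hxs : enorm (x - xstar) <= 2 * r.
  by apply: le_trans (enormD _ _) _; rewrite enormN; lra.
have hkD : enorm (k *: D) <= 2 * r.
  rewrite enormZ gtr0_norm //.
  apply: le_trans (ler_wpM2l (ltW k0) (gphi_lip hs hx)) _.
  by rewrite mulrA mulVf ?mul1r // lt0r_neq0.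
have hz1 : enorm (x - k *: D) <= 5 * r.
  apply: (@le5 _ 3); last by lra.
  by apply: le_trans (enormD _ _) _; rewrite enormN; lra.
have hz2 : enorm (xstar + k *: D) <= 5 * r.
  apply: (@le5 _ 3); last by lra.
  by apply: le_trans (enormD _ _) _; lra.
have h := cocoer hs5 hx5 hz1 hz2.
have eD : D = g x - mu *: (x - xstar).
  by rewrite /D /gphi gstar; apply/rowP => i; rewrite !mxE; ring.
move: h; rewrite -/D eD; move: (x - xstar) => d.
rewrite QnB dotvBl dotvZr dotvZl QnZ -/(Qn d).
nra.
Qed.


Lemma mu_pos : locally_strongly_convex f g ->
  (exists a b : V, [/\ enorm a <= 5 * r, enorm b <= 5 * r & a != b]) -> 0 < mu.
Proof.
move=> lsc [a [b [ha hb ab]]].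
have [d [c [d0 [c0 hu]]]] := unif lsc (5 * r).
apply: (lt_le_trans c0); rewrite hmudef; apply: lb_le_inf.
  exists (dotv (g b - g a) (b - a) / enorm (b - a) ^+ 2); exists a, b; split => //.
move=> q [x [y [hx hy xy ->]]].
have Qp : 0 < enorm (y - x) ^+ 2.
  rewrite enorm_sq lt0r Qn_ge0 andbT; apply/eqP => /Qn_eq0/eqP.
  by rewrite subr_eq0 eq_sym (negbTE xy).
rewrite ler_pdivlMr // enorm_sq.
set w := enorm (y - x).
have w0 : 0 <= w := enorm_ge0 _.
pose F t := dotv (g (x + t *: (y - x))) (y - x).
have := @subdiv R (fun s t => F s - F t) (- (c * Qn (y - x))) (d / (w + 1)).
rewrite /F scale0r addr0 scale1r addrSub dotvBl => h.
suff : dotv (g x) (y - x) - dotv (g y) (y - x) <= - (c * Qn (y - x)) by lra.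
apply: h.
- by rewrite divr_gt0 //; lra.
- by move=> s t u; lra.
- move=> s t s0 st t1 hst.
  have hs : enorm (x + s *: (y - x)) <= 5 * r by apply: seg_in => //; apply/andP; split => //; lra.
  have eba : x + t *: (y - x) - (x + s *: (y - x)) = (t - s) *: (y - x).
    by apply/rowP => i; rewrite !mxE; ring.
  have hd : enorm (x + t *: (y - x) - (x + s *: (y - x))) < d.
    rewrite eba enormZ ger0_norm ?subr_ge0 // -/w.
    move: hst; rewrite ltr_pdivlMr; last by lra.
    nra.
  have := hu _ _ hs hd; rewrite eba QnZ dotvZr dotvBl.
  rewrite -/(F s) -/(F t) => h2.
  have [->|ts] := eqVneq t s.
    by rewrite !subrr mulr0.
  have ts' : 0 < t - s by rewrite subr_gt0 lt_neqAle eq_sym ts st.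
  have : c * (t - s) * Qn (y - x) <= F t - F s.
    rewrite -(ler_pM2l ts'); nra.
  nra.
Qed.

Variables (abar : R) (alpha : nat -> R) (xs : nat -> V).
Hypothesis habar : 0 < abar.
Hypothesis habarL : abar < L^-1.
Hypothesis halpha : forall k, abar <= alpha k <= L^-1.
Hypothesis hx0 : xs 0%N = x0.
Hypothesis hstep : forall k, xs k.+1 = xs k - alpha k *: g (xs k).

Ltac prep2 := have habar' := habar; have hL0' := hL0; have hmu0' := hmu0;
  have hmuL' := hmuL; have hrp' := hrp.

Lemma alpha_props k : 0 < alpha k /\ alpha k * L <= 1.
Proof.
have := halpha k => /andP[h1 h2]; split; first exact: lt_le_trans habar h1.
by rewrite -ler_pdivlMr // div1r.
Qed.

Lemma step_desc k : f (xs k) <= f x0 ->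
  f (xs k.+1) <= f (xs k) - alpha k / 2 * Qn (g (xs k)).
Proof.
prep2.
move=> hk.
have [ha haL] := alpha_props k.
set y := xs k in hk *; set a := alpha k in ha haL *.
have hy : enorm y <= r := hLam hk.
have hs := xstar_in.
have hy5 : enorm y <= 5 * r by apply: (@le5 _ 1); rewrite ?mul1r //; lra.
have hs5 : enorm xstar <= 5 * r by apply: (@le5 _ 1); rewrite ?mul1r //; lra.
have hyx : enorm (y - xstar) <= 2 * r.
  by apply: le_trans (enormD _ _) _; rewrite enormN; lra.
have hG : enorm (g y) <= L * enorm (y - xstar).
  by have := hLip hy5 hs5; rewrite gstar subr0.
have hn : enorm (y + - (a *: g y)) <= 5 * r.
  apply: (@le5 _ 3); last by lra.
  apply: le_trans (enormD _ _) _; rewrite enormN enormZ gtr0_norm //.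
  have : a * enorm (g y) <= a * (L * (2 * r)).
    apply: ler_wpM2l; first exact: ltW.
    apply: le_trans hG _; apply: ler_wpM2l => //; exact: ltW.
  nra.
have := descent hy5 hn.
rewrite hstep -/y -/a dotvNr dotvZr QnN QnZ -/(Qn (g y)).
have hQ := Qn_ge0 (g y).
have P : 0 <= (1 - a * L) * a * Qn (g y) by rewrite !mulr_ge0 ?subr_ge0 // ltW.
lra.
Qed.

Lemma lev k : f (xs k) <= f x0.
Proof.
elim: k => [|k IH]; first by rewrite hx0.
apply: le_trans (step_desc IH) _; apply: le_trans IH.
have [ha _] := alpha_props k; have hQ := Qn_ge0 (g (xs k)).
by rewrite gerBl mulr_ge0 // divr_ge0 // ltW.
Qed.

Lemma rate_a k : (mu + L) * Qn (xs k.+1 - xstar) <=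
  (mu + L - 2 * abar * mu * L) * Qn (xs k - xstar).
Proof.
prep2.
have [ha haL] := alpha_props k.
have hab : abar <= alpha k by have /andP[] := halpha k.
have hy : enorm (xs k) <= r := hLam (lev k).
have hN := nesterov hy.
have -> : xs k.+1 - xstar = (xs k - xstar) - alpha k *: g (xs k).
  by rewrite hstep; apply/rowP => i; rewrite !mxE; ring.
move: hN; move: (xs k - xstar) (g (xs k)) => d G hN.
rewrite QnB dotvZr QnZ (dotvC d G).
set a := alpha k in ha haL hab *.
have hQd := Qn_ge0 d; have hQG := Qn_ge0 G.
have P1 : 0 <= a * ((L + mu) * dotv G d - Qn G - mu * L * Qn d).
  by apply: mulr_ge0; [exact: ltW | lra].
have am : a * mu <= a * L by rewrite ler_wpM2l ?(ltW ha) // ltW.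
have P2 : 0 <= a * (2 - a * (L + mu)) * Qn G.
  by rewrite !mulr_ge0 ?(ltW ha) // subr_ge0; nra.
have P3 : 0 <= (a - abar) * (mu * L * Qn d).
  by rewrite !mulr_ge0 ?subr_ge0 // ltW.
nra.
Qed.

Lemma PL k : 2 * mu * (f (xs k) - f xstar) <= Qn (g (xs k)).
Proof.
prep2.
have hy : enorm (xs k) <= r := hLam (lev k).
have hs := xstar_in.
have hy5 : enorm (xs k) <= 5 * r by apply: (@le5 _ 1); rewrite ?mul1r //; lra.
have hs5 : enorm (xs k + (xstar - xs k)) <= 5 * r.
  by rewrite addrSub; apply: (@le5 _ 1); rewrite ?mul1r //; lra.
have := strong_lower hy5 hs5; rewrite addrSub.
move: (xstar - xs k) (g (xs k)) => w G h.
have h2 := Qn_ge0 (G + mu *: w).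
rewrite QnD dotvZr QnZ in h2.
have P : 0 <= 2 * mu * (f xstar - f (xs k) - dotv G w - mu / 2 * Qn w).
  by rewrite mulr_ge0 ?mulr_ge0 //; lra.
nra.
Qed.

Lemma rate_b k : f (xs k.+1) - f xstar <=
  (1 - mu ^+ 2 * abar ^+ 2 / 4) * (f (xs k) - f xstar).
Proof.
prep2.
have [ha haL] := alpha_props k.
have hab : abar <= alpha k by have /andP[] := halpha k.
have h1 := step_desc (lev k).
have h2 := PL k.
have hd : 0 <= f (xs k) - f xstar by rewrite subr_ge0.
have hma : mu * abar <= 1.
  have : abar * L <= 1 by rewrite -ler_pdivlMr // div1r ltW.
  nra.
set a := alpha k in ha haL hab h1.
have hQ := Qn_ge0 (g (xs k)).
have P1 : 0 <= a * (Qn (g (xs k)) - 2 * mu * (f (xs k) - f xstar)).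
  by rewrite mulr_ge0 ?subr_ge0 // ltW.
have hc : 0 <= a * mu - mu ^+ 2 * abar ^+ 2 / 4.
  have : mu * abar * (mu * abar) <= mu * abar by rewrite ler_piMr // mulr_ge0 // ltW.
  nra.
have P2 : 0 <= (f (xs k) - f xstar) * (a * mu - mu ^+ 2 * abar ^+ 2 / 4) by rewrite mulr_ge0.
nra.
Qed.

Lemma grad_b k : Qn (g (xs k)) <= 2 * L ^+ 2 / mu * (f (xs k) - f xstar).
Proof.
prep2.
have hy : enorm (xs k) <= r := hLam (lev k).
have hs := xstar_in.
have hy5 : enorm (xs k) <= 5 * r by apply: (@le5 _ 1); rewrite ?mul1r //; lra.
have hs5 : enorm xstar <= 5 * r by apply: (@le5 _ 1); rewrite ?mul1r //; lra.
have hG : enorm (g (xs k)) <= L * enorm (xs k - xstar).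
  by have := hLip hy5 hs5; rewrite gstar subr0.
have hG2 : Qn (g (xs k)) <= L ^+ 2 * Qn (xs k - xstar).
  rewrite -!enorm_sq -exprMn ler_sqr ?nnegrE ?enorm_ge0 ?mulr_ge0 ?enorm_ge0 //; exact: ltW.
have hyx : enorm (xstar + (xs k - xstar)) <= 5 * r by rewrite addrSub.
have := strong_lower hs5 hyx; rewrite addrSub gstar dotv0l addr0 => h.
rewrite mulrAC ler_pdivlMr //.
move: h hG2; move: (Qn (xs k - xstar)) (Qn (g (xs k))) => Qd QG h hG2.
have hL2 : 0 <= L ^+ 2 by exact: sqr_ge0.
have P : 0 <= L ^+ 2 * (f (xs k) - f xstar - mu / 2 * Qd) by rewrite mulr_ge0 //; lra.
nra.
Qed.


Lemma sqrtX (b : R) k : 0 <= b -> Num.sqrt (b ^+ k) = Num.sqrt b ^+ k.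
Proof.
move=> b0; elim: k => [|k IH]; first by rewrite !expr0 sqrtr1.
by rewrite !exprS sqrtrM // IH.
Qed.

Lemma q0_props : 0 < 2 * abar * mu * L / (mu + L) < 1.
Proof.
prep2.
have aL : abar * L < 1 by rewrite -ltr_pdivlMr // div1r.
apply/andP; split; first by rewrite divr_gt0 ?mulr_gt0 //; lra.
rewrite ltr_pdivrMr; last by lra.
nra.
Qed.

Lemma q1_props : 0 < mu ^+ 2 * abar ^+ 2 / 4 < 1.
Proof.
prep2.
have aL : abar * L < 1 by rewrite -ltr_pdivlMr // div1r.
have ma : mu * abar < 1 by nra.
have ma0 : 0 < mu * abar by rewrite mulr_gt0.
apply/andP; split; first by rewrite divr_gt0 ?mulr_gt0 ?exprn_gt0 //.
rewrite ltr_pdivrMr // mul1r -exprMn; nra.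
Qed.

Lemma seq_a k : Qn (xs k - xstar) <=
  (1 - 2 * abar * mu * L / (mu + L)) ^+ k * Qn (xs 0%N - xstar).
Proof.
prep2.
have /andP[_ q1] := q0_props.
elim: k => [|k IH]; first by rewrite expr0 mul1r.
rewrite exprS -mulrA.
have h := rate_a k.
have hml : 0 < mu + L by lra.
apply: le_trans (_ : _ <= (1 - 2 * abar * mu * L / (mu + L)) * Qn (xs k - xstar)) _.
  have -> : (1 - 2 * abar * mu * L / (mu + L)) * Qn (xs k - xstar) =
      (mu + L - 2 * abar * mu * L) * Qn (xs k - xstar) / (mu + L).
    by field; apply: lt0r_neq0.
  by rewrite ler_pdivlMr // mulrC.
by apply: ler_wpM2l => //; rewrite subr_ge0 ltW.
Qed.

Lemma seq_b k : f (xs k) - f xstar <=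
  (1 - mu ^+ 2 * abar ^+ 2 / 4) ^+ k * (f (xs 0%N) - f xstar).
Proof.
have /andP[_ q1] := q1_props.
elim: k => [|k IH]; first by rewrite expr0 mul1r.
apply: le_trans (rate_b k) _.
have q1' : 0 <= 1 - mu ^+ 2 * abar ^+ 2 / 4 by rewrite subr_ge0 ltW.
apply: le_trans (ler_wpM2l q1' IH) _.
by rewrite [_ ^+ k.+1]exprS mulrA.
Qed.

Lemma main_pack (eps : R) : 0 < eps ->
  let q0 := 2 * abar * mu * L / (mu + L) in
  let q1 := mu ^+ 2 * abar ^+ 2 / 4 in
  (exists N, first_index (fun k => enorm (xs k - xstar) <= eps) N /\
     (N = 0%N \/ (N%:Z <= Mbound eps (enorm (x0 - xstar)) (Num.sqrt (1 - q0)))%R)) /\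
  (exists N, first_index (fun k => f (xs k) - f xstar <= eps) N /\
     (N = 0%N \/ (N%:Z <= Mbound eps (f x0 - f xstar) (1 - q1))%R)) /\
  (exists N, first_index (fun k => enorm (g (xs k)) <= eps) N /\
     (N = 0%N \/ (N%:Z <= Mbound eps
        (Num.sqrt (2 * L ^+ 2 / mu * (f x0 - f xstar))) (Num.sqrt (1 - q1)))%R)).
Proof.
prep2.
move=> eps0 q0 q1.
have /andP[q00 q01] : 0 < q0 < 1 := q0_props.
have /andP[q10 q11] : 0 < q1 < 1 := q1_props.
have b0 : 0 < 1 - q0 by rewrite subr_gt0.
have b1 : 0 < 1 - q1 by rewrite subr_gt0.
have hd0 : 0 <= f x0 - f xstar by rewrite subr_ge0.
split; [|split].
- apply: count_bound.
  + exact: eps0.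
  + exact: enorm_ge0.
  + by rewrite sqrtr_gt0.
  + by rewrite -[X in _ < X]sqrtr1 ltr_sqrt ?ltr01 //; lra.
  + move=> k; rewrite !enormE -sqrtX ?(ltW b0) // -sqrtrM ?exprn_ge0 ?(ltW b0) //.
    by rewrite ler_sqrt ?mulr_ge0 ?exprn_ge0 ?Qn_ge0 ?(ltW b0) // -hx0; exact: seq_a.
- apply: count_bound => //; first by lra.
  move=> k; rewrite -hx0; exact: seq_b.
- apply: count_bound.
  + exact: eps0.
  + exact: sqrtr_ge0.
  + by rewrite sqrtr_gt0.
  + by rewrite -[X in _ < X]sqrtr1 ltr_sqrt ?ltr01 //; lra.
  + move=> k; rewrite enormE -sqrtX ?(ltW b1) // -sqrtrM ?exprn_ge0 ?(ltW b1) //.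
    have hc : 0 <= 2 * L ^+ 2 / mu by rewrite divr_ge0 ?mulr_ge0 ?sqr_ge0 // ltW.
    rewrite ler_sqrt; last by rewrite mulr_ge0 ?exprn_ge0 ?(ltW b1) // mulr_ge0.
    apply: le_trans (grad_b k) _.
    rewrite [leRHS]mulrCA; apply: (ler_wpM2l hc); rewrite -hx0; exact: seq_b.
Qed.

End Main.

Unset Implicit Arguments.

Theorem theorem3p18 (R : realType) (n : nat)
  (f : 'rV[R]_n -> R) (g : 'rV[R]_n -> 'rV[R]_n)
  (x0 xstar : 'rV[R]_n) (r LO abar eps : R)
  (x : nat -> 'rV[R]_n) (alpha : nat -> R) :
  is_gradient f g ->
  convex_fun f ->
  continuous g ->
  locally_strongly_convex f g ->
  locally_lipschitz g ->
  (* x* is an optimal solution (hence argmin f is nonempty), f* = f x* *)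
  (forall y, f xstar <= f y) ->
  (* Lambda(x0) is bounded and r is the max of ||x|| over Lambda(x0) *)
  (exists B : R, forall y, f y <= f x0 -> enorm y <= B) ->
  (exists y, f y <= f x0 /\ enorm y = r) ->
  (forall y, f y <= f x0 -> enorm y <= r) ->
  (* L_Omega on Omega = closed ball B(0; 5r) *)
  0 < LO ->
  (forall y z, enorm y <= 5 * r -> enorm z <= 5 * r ->
     enorm (g y - g z) <= LO * enorm (y - z)) ->
  mu_on g [set y | enorm y <= 5 * r] < LO ->
  (* gradient method *)
  0 < abar -> abar < LO^-1 ->
  (forall k, abar <= alpha k <= LO^-1) ->
  x 0%N = x0 ->
  (forall k, x k.+1 = x k - alpha k *: g (x k)) ->
  0 < eps ->
  let muO := mu_on g [set y | enorm y <= 5 * r] in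
  let fstar := f xstar in
  let q0 := 2 * abar * muO * LO / (muO + LO) in
  let q1 := muO ^+ 2 * abar ^+ 2 / 4 in
  (* (a) *)
  (exists N, first_index (fun k => enorm (x k - xstar) <= eps) N /\
     (N = 0%N \/ (N%:Z <= Mbound eps (enorm (x0 - xstar)) (Num.sqrt (1 - q0)))%R)) /\
  (* (b) *)
  (exists N, first_index (fun k => f (x k) - fstar <= eps) N /\
     (N = 0%N \/ (N%:Z <= Mbound eps (f x0 - fstar) (1 - q1))%R)) /\
  (* (c) *)
  (exists N, first_index (fun k => enorm (g (x k)) <= eps) N /\
     (N = 0%N \/ (N%:Z <= Mbound eps
        (Num.sqrt (2 * LO ^+ 2 / muO * (f x0 - fstar))) (Num.sqrt (1 - q1)))%R)).
Proof.
move=> hg hconv hgc hlsc hll hmin hB hrex hLam hL0 hLip hmuL habar habarL halpha hx0 hstep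
  heps muO fstar q0 q1.
have [e|ne] := eqVneq x0 xstar.
  have gs : g xstar = 0 := gstar hg hmin.
  split; [|split]; exists 0%N; (split; [split => // | by left]).
  - by rewrite hx0 e subrr enorm0 ltW.
  - by rewrite /fstar hx0 e subrr ltW.
  - by rewrite hx0 e gs enorm0 ltW.
have hx0r : enorm x0 <= r := hLam x0 (lexx _).
have hsr : enorm xstar <= r := hLam xstar (hmin x0).
have hrp : 0 < r.
  rewrite lt_neqAle (le_trans (enorm_ge0 _) hx0r) andbT.
  apply/eqP => r0; move: ne; rewrite -r0 in hx0r hsr.
  have z1 : enorm x0 = 0 by apply/eqP; rewrite eq_le hx0r enorm_ge0.
  have z2 : enorm xstar = 0 by apply/eqP; rewrite eq_le hsr enorm_ge0.
  by rewrite (enorm_eq0 z1) (enorm_eq0 z2) eqxx.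
have h5 : forall y : 'rV[R]_n, enorm y <= r -> enorm y <= 5 * r.
  by move=> y hy; apply: le_trans hy _; rewrite ler_peMl ?ltW //; lra.
have hmu0 : 0 < muO.
  apply: (mu_pos (r := r) (mu := muO) erefl hlsc).
  by exists x0, xstar; split => //; apply: h5.
exact: (main_pack hg hmin hLam hL0 hLip (erefl muO) hmuL hmu0 hrp habar habarL halpha
  hx0 hstep heps).
Qed.
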